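(* Let $G_n=([n],E_n)$ be any finite undirected graph without isolated vertices, with degree vector $\boldsymbol{d}=(d_i)_{i\in[n]}$, and let $c\in(0,1)$. Let $\boldsymbol{R}=(R_i)_{i\in[n]}$ be the graph-normalized PageRank vector of $G_n$ with damping factor $c$. Then $$R_i\le d_i\qquad\text{for all } i\in[n].$$
   Context: $\boldsymbol{A}=(a_{ij})_{i,j\in[n]}\in\{0,1\}^{n\times n}$ is the (symmetric) adjacency matrix of $G_n$ and $d_i=\sum_j a_{ij}\ge 1$. Define the row-stochastic matrix $\boldsymbol{P}=(p_{ij})$ by $p_{ij}=a_{ij}/d_i$. The graph-normalized PageRank vector with damping factor $c\in(0,1)$ is the unique (row) vector $\boldsymbol{R}\in[0,n]^n$ solving $\boldsymbol{R}=c\,\boldsymbol{R}\boldsymbol{P}+(1-c)\boldsymbol{1}_n$, where $\boldsymbol{1}_n$ is the all-ones vector; equivalently $R_k=(1-c)\sum_{s=0}^\infty c^s\sum_{j=1}^n(\boldsymbol{P}^s)_{jk}$. *)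

(* Defs.v *)
From mathcomp Require Import all_boot all_order all_algebra.
Set Implicit Arguments. Unset Strict Implicit. Unset Printing Implicit Defensive.
Import Order.TTheory GRing.Theory Num.Theory.
Local Open Scope ring_scope.

Definition degree {R : realFieldType} {n : nat} (A : 'M[R]_n) (i : 'I_n) : R :=
  \sum_(j < n) A i j.

Definition transP {R : realFieldType} {n : nat} (A : 'M[R]_n) : 'M[R]_n :=
  \matrix_(i, j) (A i j / degree A i).

Definition adjacency {R : realFieldType} {n : nat} (A : 'M[R]_n) : Prop :=
  (forall i j, A i j = 0 \/ A i j = 1) /\ (forall i j, A i j = A j i).

Definition is_pagerank {R : realFieldType} {n : nat} (A : 'M[R]_n) (c : R)
  (Rv : 'rV[R]_n) : Prop :=
  Rv = c *: (Rv *m transP A) + (1 - c) *: const_mx 1.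

(* Main.v *)
Require Import Defs.
From mathcomp Require Import all_boot all_order all_algebra.
From mathcomp Require Import lra.
Import Order.TTheory GRing.Theory Num.Theory.
Local Open Scope ring_scope.

Theorem mainTheorem1 (R : realFieldType) (n : nat) (A : 'M[R]_n) (c : R)
  (Rv : 'rV[R]_n) :
  adjacency A ->
  (forall i, 1 <= degree A i) ->
  0 < c -> c < 1 ->
  is_pagerank A c Rv ->
  forall i : 'I_n, Rv 0 i <= degree A i.
Proof.
move=> [A01 Asym] d1 c0 c1 HP i.
have dpos k : 0 < degree A k by apply: lt_le_trans (d1 k); exact: ltr01.
have Age k l : 0 <= A k l by case: (A01 k l) => ->; rewrite ?ler01.
have Eq k : Rv 0 k = c * \sum_j (Rv 0 j / degree A j) * A j k + (1 - c).
  rewrite {1}HP !mxE mulr1; do 2 f_equal.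
  by apply: eq_bigr => j _; rewrite mxE mulrA mulrAC.
set x := fun k => Rv 0 k / degree A k.
have [m _ Hm] := @arg_maxP _ _ 'I_n i xpredT x isT.
set M := x m.
have HM : M <= 1.
  have Hs : \sum_j x j * A j m <= M * degree A m.
    rewrite /degree mulr_sumr; apply: ler_sum => j _.
    by rewrite (Asym j m) [x j * _]mulrC [M * _]mulrC; apply: ler_wpM2l => //; exact: Hm.
  have E := Eq m.
  have Hd : M * degree A m <= 1.
    have : M * degree A m = Rv 0 m by rewrite /M /x divfK // gt_eqF.
    move=> EM.
    have : (1 - c) * (M * degree A m) <= (1 - c).
      have := ler_wpM2l (ltW c0) Hs.
      move: E; rewrite -EM => E Hc. lra.
    move=> H; rewrite -subr_gt0 in c1.
    by rewrite -(ler_pM2l c1) mulr1.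
  rewrite leNgt; apply/negP => M1.
  have M0 : 0 <= M by exact: le_trans ler01 (ltW M1).
  have : 1 < M * degree A m.
    apply: lt_le_trans M1 _; rewrite -{1}[M]mulr1; apply: ler_wpM2l => //.
  by rewrite ltNge Hd.
have Hi : Rv 0 i = x i * degree A i by rewrite /x divfK // gt_eqF.
rewrite Hi -{2}[degree A i]mul1r; apply: ler_wpM2r; first exact: ltW.
exact: le_trans (Hm i isT) HM.
Qed.
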